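(* An $L$-layer RNN with $H$ heads, hidden dimension $m$ and precision $p$ cannot solve the permutation composition task $\mathsf{PerCom}$ on $[n]$ whenever $LHmp<\log(n!)$. The same holds for RNNs with chain-of-thought.
   Context: Permutation composition $\mathsf{PerCom}(\sigma,\tau)$: the input consists of two bijections $\sigma,\tau:[n]\to[n]$, given as $n$ tokens $\sigma(1),\dots,\sigma(n)$ followed by $n$ tokens $\tau(1),\dots,\tau(n)$. The required output is the sequence $\sigma(\tau(1)),\dots,\sigma(\tau(n))$. RNN layer (one head) with hidden dimension $m$ and precision $p$: one fixes $\mathrm{h}_0\in\mathbb{R}^m$ and computes $\mathrm{h}_i=g_{(i)}(x_i,\mathrm{h}_{i-1})\in\mathbb{R}^m$ and $y_i=f_{(i)}(x_i,\mathrm{h}_i)$ for arbitrary functions $g_{(i)},f_{(i)}$, with hidden states represented by $p$-bit numbers. An $L$-layer, $H$-head RNN stacks $L$ layers, each of $H$ parallel heads with concatenated outputs, interleaved with arbitrary position-wise maps. With chain-of-thought, the model autoregressively generates additional tokens after the input (each appended as a new position), and the answer is read from them. *)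

(* Defs.v *)
From mathcomp Require Import all_boot all_fingroup.
Set Implicit Arguments. Unset Strict Implicit. Unset Printing Implicit Defensive.

Definition state (m p : nat) := {ffun 'I_m -> p.-tuple bool}.

(* Vocabulary: the n values [n] (as 'I_n, 0-indexed) plus arbitrary extra
   chain-of-thought symbols W. *)
Definition tok (n : nat) (W : Type) := ('I_n + W)%type.

(* An L-layer, H-head RNN with hidden dimension m and precision p.
   V is an arbitrary type of intermediate (position-wise) values.
   - emb : token embedding (position-wise map before layer 1)
   - h0 l j : initial hidden state of head j of layer l
   - upd l j i : the update g_(i) of head j of layer l at position i
   - out l j i : the output map f_(i) of head j of layer l at position i
   - mix l i : arbitrary position-wise map applied to the concatenated head
               outputs of layer l at position i
   - nxt : read-out of a token from the final value at a position. *)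
Record rnn (n : nat) (W V : Type) (L H m p : nat) := RNN {
  emb : tok n W -> V;
  h0  : 'I_L -> 'I_H -> state m p;
  upd : 'I_L -> 'I_H -> nat -> V -> state m p -> state m p;
  out : 'I_L -> 'I_H -> nat -> V -> state m p -> V;
  mix : 'I_L -> nat -> ('I_H -> V) -> V;
  nxt : V -> tok n W }.

Section Run.
Variables (n : nat) (W V : Type) (L H m p : nat) (M : rnn n W V L H m p).

Fixpoint layer_run (l : 'I_L) (i : nat) (hs : 'I_H -> state m p) (xs : seq V)
  : seq V :=
  match xs with
  | [::] => [::]
  | x :: xs' =>
      let hs' := fun j => upd M l j i x (hs j) in
      mix M l i (fun j => out M l j i x (hs' j)) :: layer_run l i.+1 hs' xs'
  end.

Definition net_run (s : seq (tok n W)) : seq V :=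
  foldl (fun vs l => layer_run l 0 (h0 M l) vs) (map (emb M) s) (enum 'I_L).

Definition outputs (s : seq (tok n W)) : seq (tok n W) := map (nxt M) (net_run s).

Definition next_tok (x : tok n W) (xs : seq (tok n W)) : tok n W :=
  nxt M (last (emb M x) (net_run (x :: xs))).

Fixpoint gen (k : nat) (x : tok n W) (xs : seq (tok n W)) : seq (tok n W) :=
  match k with
  | 0 => [::]
  | k'.+1 => let z := next_tok x xs in z :: gen k' x (rcons xs z)
  end.

Definition cot_tokens (k : nat) (s : seq (tok n W)) : seq (tok n W) :=
  match s with [::] => [::] | x :: xs => gen k x xs end.

End Run.

Definition percom_input (n : nat) (W : Type) (s t : {perm 'I_n}) : seq (tok n W) :=
  [seq inl (s i) | i <- enum 'I_n] ++ [seq inl (t i) | i <- enum 'I_n].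

Definition percom_answer (n : nat) (W : Type) (s t : {perm 'I_n}) : seq (tok n W) :=
  [seq inl (s (t i)) | i <- enum 'I_n].

(* Without CoT: the outputs at the n positions of tau are sigma(tau(i)). *)
Definition solves_PerCom n W V L H m p (M : rnn n W V L H m p) : Prop :=
  forall s t : {perm 'I_n},
    drop n (outputs M (percom_input W s t)) = percom_answer W s t.

Definition solves_PerCom_CoT n W V L H m p (M : rnn n W V L H m p) (T : nat) : Prop :=
  forall s t : {perm 'I_n},
    drop (T - n) (cot_tokens M T (percom_input W s t)) = percom_answer W s t.

(* Main.v *)
Require Import Defs.
From mathcomp Require Import all_boot all_fingroup.
From Stdlib Require Import FunctionalExtensionality.
Set Implicit Arguments. Unset Strict Implicit. Unset Printing Implicit Defensive.

Fixpoint fin n W V L H m p (M : rnn n W V L H m p) (l : 'I_L) (i : nat)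
  (hs : 'I_H -> state m p) (xs : seq V) : 'I_H -> state m p :=
  match xs with
  | [::] => hs
  | x :: xs' => fin M l i.+1 (fun j => upd M l j i x (hs j)) xs'
  end.

Lemma layer_run_cat n W V L H m p (M : rnn n W V L H m p) l i hs xs ys :
  layer_run M l i hs (xs ++ ys) =
  layer_run M l i hs xs ++ layer_run M l (i + size xs) (fin M l i hs xs) ys.
Proof.
elim: xs i hs => [|x xs IH] i hs /=; first by rewrite addn0.
by rewrite IH addSnnS.
Qed.

Lemma size_layer_run n W V L H m p (M : rnn n W V L H m p) l i hs xs :
  size (layer_run M l i hs xs) = size xs.
Proof. by elim: xs i hs => //= x xs IH i hs; rewrite IH. Qed.

Definition stp n W V L H m p (M : rnn n W V L H m p) l vs :=
  layer_run M l 0 (h0 M l) vs.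

Fixpoint agree n W V L H m p (M : rnn n W V L H m p) (ls : seq 'I_L)
  (vs1 vs2 : seq V) : Prop :=
  match ls with
  | [::] => True
  | l :: ls' => fin M l 0 (h0 M l) vs1 = fin M l 0 (h0 M l) vs2 /\
                agree M ls' (stp M l vs1) (stp M l vs2)
  end.

Lemma size_foldl n W V L H m p (M : rnn n W V L H m p) ls vs :
  size (foldl (fun vs l => layer_run M l 0 (h0 M l) vs) vs ls) = size vs.
Proof. by elim: ls vs => //= l ls IH vs; rewrite IH size_layer_run. Qed.

Lemma foldl_split n W V L H m p (M : rnn n W V L H m p) ls vs1 vs2 ws :
  size vs1 = size vs2 -> agree M ls vs1 vs2 ->
  exists R,
    foldl (fun vs l => layer_run M l 0 (h0 M l) vs) (vs1 ++ ws) ls =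
    foldl (fun vs l => layer_run M l 0 (h0 M l) vs) vs1 ls ++ R /\
    foldl (fun vs l => layer_run M l 0 (h0 M l) vs) (vs2 ++ ws) ls =
    foldl (fun vs l => layer_run M l 0 (h0 M l) vs) vs2 ls ++ R.
Proof.
elim: ls vs1 vs2 ws => [|l ls IH] vs1 vs2 ws hs /=; first by exists ws.
case=> hf ha.
rewrite !layer_run_cat hf hs.
apply: IH => //.
by rewrite /stp !size_layer_run.
Qed.

Fixpoint keyf n W V L H m p (M : rnn n W V L H m p) (ls : seq 'I_L)
  (vs : seq V) : seq {ffun 'I_H -> state m p} :=
  match ls with
  | [::] => [::]
  | l :: ls' => [ffun j => fin M l 0 (h0 M l) vs j] :: keyf M ls' (stp M l vs)
  end.

Lemma size_keyf n W V L H m p (M : rnn n W V L H m p) ls vs :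
  size (keyf M ls vs) = size ls.
Proof. by elim: ls vs => //= l ls IH vs; rewrite IH. Qed.

Lemma keyf_agree n W V L H m p (M : rnn n W V L H m p) ls vs1 vs2 :
  keyf M ls vs1 = keyf M ls vs2 -> agree M ls vs1 vs2.
Proof.
elim: ls vs1 vs2 => //= l ls IH vs1 vs2 [e1 e2]; split; last exact: IH.
apply: functional_extensionality => j.
by move/ffunP: e1 => /(_ j); rewrite !ffunE.
Qed.

Definition dflt H m p : {ffun 'I_H -> state m p} :=
  [ffun _ => [ffun _ => nseq_tuple p false]].

Definition key n W V L H m p (M : rnn n W V L H m p) (pre : seq (tok n W))
  : {ffun 'I_L -> {ffun 'I_H -> state m p}} :=
  [ffun i : 'I_L => nth (dflt H m p) (keyf M (enum 'I_L) (map (emb M) pre)) i].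

Lemma key_run n W V L H m p (M : rnn n W V L H m p) pre1 pre2 zs :
  key M pre1 = key M pre2 -> size pre1 = size pre2 ->
  exists R, net_run M (pre1 ++ zs) = net_run M pre1 ++ R /\
            net_run M (pre2 ++ zs) = net_run M pre2 ++ R.
Proof.
move=> hk hs; rewrite /net_run !map_cat.
apply: foldl_split; first by rewrite !size_map.
apply: keyf_agree.
apply: (eq_from_nth (x0 := dflt H m p)); first by rewrite !size_keyf.
move=> i; rewrite size_keyf size_enum_ord => hi.
by move/ffunP: hk => /(_ (Ordinal hi)); rewrite !ffunE.
Qed.

Lemma size_net_run n W V L H m p (M : rnn n W V L H m p) s :
  size (net_run M s) = size s.
Proof. by rewrite /net_run size_foldl size_map. Qed.

Lemma gen_eq n W V L H m p (M : rnn n W V L H m p) x1 xs1 x2 xs2 :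
  key M (x1 :: xs1) = key M (x2 :: xs2) -> size xs1 = size xs2 ->
  forall k zs, 0 < size zs -> gen M k x1 (xs1 ++ zs) = gen M k x2 (xs2 ++ zs).
Proof.
move=> hk hs; elim=> [|k IH] zs hz //=.
have [R [e1 e2]] := key_run zs hk (f_equal S hs).
rewrite /next_tok.
change (x1 :: xs1 ++ zs) with ((x1 :: xs1) ++ zs).
change (x2 :: xs2 ++ zs) with ((x2 :: xs2) ++ zs).
rewrite e1 e2 !last_cat.
have : size R = size zs.
  have := f_equal size e1; rewrite size_cat !size_net_run size_cat.
  by move/eqP; rewrite eqn_add2l => /eqP.
case: R e1 e2 => [|r R] e1 e2 hR; first by rewrite -hR in hz.
rewrite /= !rcons_cat IH //.
by rewrite size_rcons.
Qed.

Lemma map_eq_in (T : eqType) (U : Type) (f g : T -> U) l :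
  map f l = map g l -> forall x, x \in l -> f x = g x.
Proof.
elim: l => //= a l IH [e1 e2] y; rewrite inE => /orP [/eqP -> //|]; exact: IH.
Qed.

Definition pf n W (s : {perm 'I_n}) : seq (tok n W) := [seq inl (s i) | i <- enum 'I_n].

Lemma ans_inj n W (s1 s2 : {perm 'I_n}) :
  percom_answer W s1 1%g = percom_answer W s2 1%g -> s1 = s2.
Proof.
move=> e; apply/permP => i.
have := map_eq_in e (mem_enum _ i); rewrite /= !perm1.
by case.
Qed.

Theorem theoremA7 (n L H m p : nat) (W V : Type)
  (hsmall : 2 ^ (L * H * m * p) < n`!) :
  (forall M : rnn n W V L H m p, ~ solves_PerCom M) /\
  (forall (M : rnn n W V L H m p) (T : nat), ~ solves_PerCom_CoT M T).
Proof.
have hn : 0 < n.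
  by case: n hsmall => //; rewrite fact0 ltnS leqn0 expn_eq0.
have card_bound : forall f : {perm 'I_n} -> {ffun 'I_L -> {ffun 'I_H -> state m p}},
    injective f -> False.
  move=> f /leq_card; rewrite (_ : #|{perm 'I_n}| = n`!); last by rewrite -card_Sn.
  rewrite !card_ffun card_tuple card_bool !card_ord -!expnM => h. idtac.

  have := leq_trans hsmall h.
  by rewrite [p * _]mulnC [m * _]mulnC [H * L]mulnC ?mulnA ltnn.
have pfsz : forall s : {perm 'I_n}, size (pf W s) = n.
  by move=> s; rewrite size_map size_enum_ord.
split.
- move=> M hsol; apply: (card_bound (fun s => key M (pf W s))) => s1 s2 hk.
  apply: (@ans_inj _ W); rewrite -(hsol s1 1%g) -(hsol s2 1%g).
  have [R [e1 e2]] := key_run (pf W 1%g) hk (etrans (pfsz s1) (esym (pfsz s2))).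
  rewrite /outputs /percom_input -/(pf W s1) -/(pf W s2) -/(pf W 1%g) e1 e2.
  by rewrite -!map_drop !drop_size_cat // size_net_run pfsz.
- move=> M T hsol; apply: (card_bound (fun s => key M (pf W s))) => s1 s2 hk.
  apply: (@ans_inj _ W); rewrite -(hsol s1 1%g) -(hsol s2 1%g).
  rewrite /percom_input -/(pf W s1) -/(pf W s2) -/(pf W 1%g).
  move: hk (pfsz s1) (pfsz s2).
  case: (pf W s1) => [|x1 xs1]; first by move=> _ h0; rewrite -h0 in hn.
  case: (pf W s2) => [|x2 xs2]; first by move=> _ _ h0; rewrite -h0 in hn.
  move=> hk h1 h2 /=.
  by rewrite (gen_eq hk (eq_add_S _ _ (etrans h1 (esym h2)))) // pfsz.
Qed.
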